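(* For every $L \in \mathbb{N}_0$, every labeled graph $(G,\ell_G)$ and all vertices $u,v \in V(G)$, the following are equivalent: (1) $u$ and $v$ receive the same color after $L$ iterations of the $1$-MWL, i.e. $C^{1,\mathrm{m}}_L(u) = C^{1,\mathrm{m}}_L(v)$; (2) the mean unrolling trees $\mathsf{m\text{-}unr}(G,u,L)$ and $\mathsf{m\text{-}unr}(G,v,L)$ are isomorphic (as labeled rooted trees).
   Context: A labeled graph $(G,\ell_G)$ is a finite undirected graph $G$ with a label function $\ell_G\colon V(G)\to\Sigma$, $\Sigma$ a countable set; $N(v)$ denotes the neighborhood of $v$. For a finite multiset $X$, $\mathsf{set}(X)$ is the set of its distinct elements, $\mathsf{mul}_X(x)$ the multiplicity of $x$, and $\mathsf{freq}(X) = \{(x, \mathsf{mul}_X(x)/|X|) : x \in \mathsf{set}(X)\}$. The $1$-MWL (mean $1$-dimensional Weisfeiler--Leman algorithm) computes colorings $C^{1,\mathrm{m}}_t\colon V(G)\to\mathbb{N}$: $C^{1,\mathrm{m}}_0 = \ell_G$ (via a fixed injection $\Sigma\to\mathbb{N}$), and for $t>0$, $C^{1,\mathrm{m}}_t(v) = \mathsf{RELABEL}\bigl(C^{1,\mathrm{m}}_{t-1}(v), \mathsf{freq}(M_{t-1}(v))\bigr)$, where $M_{t-1}(v) = \{\!\!\{ C^{1,\mathrm{m}}_{t-1}(w) : w \in N(v)\}\!\!\}$ and $\mathsf{RELABEL}$ injectively maps each pair to a natural number not used in previous iterations. The unrolling tree $\mathsf{unr}(G,u,L)$ is the labeled rooted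 tree defined inductively: for $L=0$ it is a single vertex labeled $\ell_G(u)$; for $L>0$ it has a root labeled $\ell_G(u)$ under which, for each $w\in N(u)$, a copy of $\mathsf{unr}(G,w,L-1)$ is attached. Edges are regarded as directed away from the root; the root is at level $0$. Isomorphism of labeled rooted trees means a root-preserving, edge-preserving, label-preserving bijection. Mean pruning: starting from $T=\mathsf{unr}(G,u,L)$, for $l = L-1, L-2, \dots, 0$ in this order, for every vertex $x$ at level $l$ of the current tree, consider the multiset $\mathsf{des}_T(x)$ of isomorphism types of the subtrees rooted at the children of $x$; let $c$ be the greatest common divisor of the multiplicities $\{\mathsf{mul}_{\mathsf{des}_T(x)}(a) : a \in \mathsf{set}(\mathsf{des}_T(x))\}$; for each type $a$, delete $\frac{c-1}{c}\mathsf{mul}_{\mathsf{des}_T(x)}(a)$ of the child subtrees of $x$ of type $a$ (so $\mathsf{mul}(a)/c$ copies remain), updating $T$. The resulting tree is the mean unrolling tree $\mathsf{m\text{-}unr}(G,u,L)$. *)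

(* Defs.v *)
From Stdlib Require Import List Permutation.
From HB Require Import structures.
From mathcomp Require Import all_boot all_order all_algebra.
From mathcomp Require Import finmap.
From mathcomp Require Import boolp.

Set Implicit Arguments.
Unset Strict Implicit.
Unset Printing Implicit Defensive.

Local Open Scope fset_scope.

(* A labeled rooted tree: a root label and the (finite) list of child subtrees;
   the order of the list is irrelevant up to isomorphism. *)
Inductive ltree (S : Type) : Type :=
  LNode : S -> list (ltree S) -> ltree S.
Arguments LNode {S} _ _.

(* Isomorphism of labeled rooted trees (root-, edge- and label-preserving
   bijection), in its standard recursive form: equal root labels, and the
   children can be matched bijectively into pairwise isomorphic subtrees. *)
Inductive tiso (S : Type) : ltree S -> ltree S -> Prop :=
| tiso_node (a : S) (s1 s2 s2' : list (ltree S)) :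
    Permutation s2 s2' -> Forall2 (@tiso S) s1 s2' ->
    tiso (LNode a s1) (LNode a s2).

Definition mult (S : Type) (s : seq (ltree S)) (x : ltree S) : nat :=
  count (fun y => `[< tiso x y >]) s.

Definition gcd_mult (S : Type) (s : seq (ltree S)) : nat :=
  foldr (fun y g => gcdn (mult s y) g) 0%N s.

(* ch' is obtained from ch by deleting, for each isomorphism type a,
   (c-1)/c * mul(a) of the children of type a, c = gcd of the multiplicities
   (i.e. mul(a)/c copies of type a remain). *)
Definition mean_select (S : Type) (ch ch' : seq (ltree S)) : Prop :=
  (exists del, Permutation ch (ch' ++ del)) /\
  (forall x, In x ch -> mult ch x = (gcd_mult ch * mult ch' x)%N).

(* The level-by-level bottom-up procedure (levels L-1, ..., 0) is the same as
   processing every vertex after all its descendants, i.e. this recursion. *)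
Inductive mprune (S : Type) : ltree S -> ltree S -> Prop :=
| mprune_node (a : S) (ch chp ch' : list (ltree S)) :
    Forall2 (@mprune S) ch chp -> mean_select chp ch' ->
    mprune (LNode a ch) (LNode a ch').

Definition freq (X : seq nat) : {fset (nat * rat)} :=
  [fset ((x, ((count_mem x X)%:R / (size X)%:R)%R) : nat * rat) | x in X].

Definition nbr_colors (T : finType) (e : rel T) (C : T -> nat) (v : T) : seq nat :=
  [seq C w | w <- enum T & e v w].

Fixpoint mwl (Sigma : Type) (T : finType) (e : rel T) (lab : T -> Sigma)
    (inj0 : Sigma -> nat) (relabel : nat * {fset (nat * rat)} -> nat)
    (t : nat) : T -> nat :=
  match t with
  | 0 => fun v => inj0 (lab v)
  | t'.+1 => fun v =>
      relabel (mwl e lab inj0 relabel t' v,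
               freq (nbr_colors e (mwl e lab inj0 relabel t') v))
  end.

Fixpoint unr (Sigma : Type) (T : finType) (e : rel T) (lab : T -> Sigma)
    (L : nat) (u : T) : ltree Sigma :=
  match L with
  | 0 => LNode (lab u) nil
  | L'.+1 => LNode (lab u) [seq unr e lab L' w | w <- enum T & e u w]
  end.

(* Main.v *)
Require Import Defs.
From Stdlib Require Import List Permutation.
From HB Require Import structures.
From mathcomp Require Import all_boot all_order all_algebra.
From mathcomp Require Import finmap boolp.
From mathcomp Require Import zify ring.
Import GRing.Theory Num.Theory.

Set Implicit Arguments.
Unset Strict Implicit.
Unset Printing Implicit Defensive.

Fixpoint ltree_ind' (S : Type) (P : ltree S -> Prop)
  (H : forall a s, Forall P s -> P (LNode a s)) (t : ltree S) : P t :=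
  match t with
  | LNode a s => H a s ((fix F (s : list (ltree S)) : Forall P s :=
                           match s with
                           | nil => Forall_nil _
                           | x :: s' => Forall_cons _ (ltree_ind' H x) (F s')
                           end) s)
  end.

Lemma tiso_inv (S : Type) a b (s1 s2 : list (ltree S)) :
  tiso (LNode a s1) (LNode b s2) ->
  a = b /\ exists s2', Permutation s2 s2' /\ Forall2 (@tiso S) s1 s2'.
Proof. move=> H; inversion H; subst; split => //; by exists s2'. Qed.

Lemma tiso_refl (S : Type) (t : ltree S) : tiso t t.
Proof.
elim/ltree_ind': t => a s IH; apply: (@tiso_node S a s s s (Permutation_refl s)).
elim: IH => [|x l Hx _ IH]; by constructor.
Qed.

Lemma tiso_sym (S : Type) (t1 t2 : ltree S) : tiso t1 t2 -> tiso t2 t1.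
Proof.
revert t2; induction t1 as [a s1 IH] using ltree_ind'; move=> [b s2] H0; have [Eab [s2' [P F]]] := tiso_inv H0; subst b.
have F' : Forall2 (@tiso S) s2' s1.
  apply: Forall2_flip; elim: F IH {P} => [|x y l l' Hxy _ IHF] IH; first by constructor.
  constructor; [exact: (Forall_inv IH) | exact: (IHF (Forall_inv_tail IH))].
have [s1' [P1 F1]] := Permutation_Forall2 (Permutation_sym P) F'.
exact: (@tiso_node S a s2 s1 s1' P1 F1).
Qed.

Lemma tiso_trans (S : Type) (t1 t2 t3 : ltree S) :
  tiso t1 t2 -> tiso t2 t3 -> tiso t1 t3.
Proof.
revert t2 t3; induction t1 as [a s1 IH] using ltree_ind'; move=> [b s2] [c s3] H1 H2.
have [Eab [s2' [P2 F12]]] := tiso_inv H1; have [Ebc [s3' [P3 F23]]] := tiso_inv H2; subst b c.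
have [s3'' [P3' F23']] := Permutation_Forall2 P2 F23.
apply: (@tiso_node S a s1 s3 s3'' (Permutation_trans P3 P3')).
elim: F12 s3'' F23' IH {P2 P3 P3' F23} => [|x y l l' Hxy _ IHF] s3'' F IH.
  by inversion F.
inversion F as [|? ? ? ? Hy F']; subst; constructor.
  exact: (Forall_inv IH) _ _ Hxy Hy.
exact: IHF _ F' (Forall_inv_tail IH).
Qed.

Lemma tisoE (S : Type) (x y z : ltree S) :
  tiso y z -> `[< tiso x y >] = `[< tiso x z >].
Proof.
move=> Hyz; apply/asboolP/asboolP => H; first exact: tiso_trans H Hyz.
exact: tiso_trans H (tiso_sym Hyz).
Qed.

Lemma mult_cons (S : Type) (s : seq (ltree S)) x y :
  mult (y :: s) x = `[< tiso x y >] + mult s x.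
Proof. by []. Qed.

Lemma mult_cat (S : Type) (s1 s2 : seq (ltree S)) x :
  mult (s1 ++ s2) x = mult s1 x + mult s2 x.
Proof. by rewrite /mult count_cat. Qed.

Lemma mult_nil (S : Type) (x : ltree S) : mult nil x = 0.
Proof. by []. Qed.

Lemma mult_tiso (S : Type) (s : seq (ltree S)) x y :
  tiso x y -> mult s x = mult s y.
Proof.
move=> Hxy; apply: eq_count => z /=; apply/asboolP/asboolP => H.
  exact: tiso_trans (tiso_sym Hxy) H.
exact: tiso_trans Hxy H.
Qed.

Lemma mult_perm (S : Type) (s1 s2 : seq (ltree S)) x :
  Permutation s1 s2 -> mult s1 x = mult s2 x.
Proof.
elim=> [|y l l' _ IH|y z l|l l' l'' _ IH1 _ IH2] //.
- by rewrite !mult_cons IH.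
- by rewrite !mult_cons addnCA.
- by rewrite IH1.
Qed.

Lemma mult_F2 (S : Type) (s1 s2 : seq (ltree S)) x :
  Forall2 (@tiso S) s1 s2 -> mult s1 x = mult s2 x.
Proof.
elim=> [|y z l l' Hyz _ IH] //.
by rewrite !mult_cons IH (tisoE x Hyz).
Qed.

Lemma mult_dich (S : Type) (s : seq (ltree S)) x :
  mult s x = 0 \/ exists y, In y s /\ tiso x y.
Proof.
elim: s => [|y s IH]; first by left.
rewrite mult_cons; case: (boolP `[< tiso x y >]) => [/asboolP H|_].
  by right; exists y; split => //; left.
case: IH => [->|[z [Hz Hxz]]]; first by left.
by right; exists z; split => //; right.
Qed.

Lemma mult_refl_pos (S : Type) (s : seq (ltree S)) x :
  In x s -> 0 < mult s x.
Proof.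
elim: s => [|y s IH] //; case=> [->|H].
  by rewrite mult_cons; case: asboolP => // /(_ (tiso_refl x)).
by rewrite mult_cons (leq_trans (IH H)) // leq_addl.
Qed.

Definition G (S : Type) (f : ltree S -> nat) (s : seq (ltree S)) : nat :=
  foldr (fun y g => gcdn (f y) g) 0 s.

Lemma G_mul (S : Type) c (f : ltree S -> nat) s :
  G (fun y => c * f y) s = c * G f s.
Proof. elim: s => [|y s IH] /=; first by rewrite muln0. by rewrite IH muln_gcdr. Qed.

Lemma G_dvd (S : Type) d (f : ltree S -> nat) s :
  (forall y, In y s -> d %| f y) -> d %| G f s.
Proof.
elim: s => [|y s IH] H /=; first exact: dvdn0.
by rewrite dvdn_gcd H /= ?IH //; [move=> z Hz; apply: H; right | left].
Qed.

Lemma G_ext (S : Type) (f f' : ltree S -> nat) s :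
  (forall y, In y s -> f y = f' y) -> G f s = G f' s.
Proof.
elim: s => [|y s IH] H //=.
by rewrite H ?IH //; [move=> z Hz; apply: H; right | left].
Qed.

Lemma gcd_multE (S : Type) (s : seq (ltree S)) : gcd_mult s = G (mult s) s.
Proof. by []. Qed.

Lemma ms_all (S : Type) (chp ch' : seq (ltree S)) :
  mean_select chp ch' -> forall x, mult chp x = gcd_mult chp * mult ch' x.
Proof.
move=> [[del P] H] x.
case: (mult_dich chp x) => [H0|[y [Hy Hxy]]].
  have := mult_perm x P; rewrite mult_cat H0 => /esym/eqP.
  by rewrite addn_eq0 => /andP[/eqP -> _]; rewrite muln0.
by rewrite (mult_tiso _ Hxy) (mult_tiso ch' Hxy) H.
Qed.

Lemma ms_nil (S : Type) (ch' : seq (ltree S)) : mean_select nil ch' -> ch' = nil.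
Proof.
move=> [[del P] _]; have := Permutation_nil P.
by case: ch' {P}.
Qed.

Lemma ms_gpos (S : Type) (chp ch' : seq (ltree S)) y :
  In y chp -> 0 < gcd_mult chp.
Proof.
case: chp => [|z s] //= _.
by rewrite gcdn_gt0 (mult_refl_pos (x:=z)) //; left.
Qed.

Lemma ms_G1 (S : Type) (chp ch' : seq (ltree S)) y :
  mean_select chp ch' -> In y chp -> G (mult ch') chp = 1.
Proof.
move=> Hm Hy; have gpos := ms_gpos ch' Hy.
have E : gcd_mult chp = gcd_mult chp * G (mult ch') chp.
  rewrite -G_mul {1}gcd_multE; apply: G_ext => z _; exact: ms_all.
by apply/eqP; rewrite -(eqn_pmul2l gpos) muln1 -E.
Qed.

Lemma lemmaA (S : Type) (chu chu' chv chv' : seq (ltree S)) a b :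
  mean_select chu chu' -> mean_select chv chv' -> 0 < a -> 0 < b ->
  (forall x, a * mult chu x = b * mult chv x) ->
  forall x, mult chu' x = mult chv' x.
Proof.
move=> Hu Hv a0 b0 H.
case Eu: chu Hu H => [|yu su] Hu H.
  have -> := ms_nil Hu.
  case Ev: chv Hv H => [|yv sv] Hv H; first by rewrite (ms_nil Hv).
  have P0 := mult_refl_pos (s:=yv::sv) (x:=yv) (or_introl erefl).
  have := H yv; rewrite mult_nil muln0 => E.
  by move: P0; rewrite -(ltn_pmul2l b0) -E muln0.
rewrite -Eu in Hu H.
case Ev: chv Hv H => [|yv sv] Hv H.
  have P0 := mult_refl_pos (s:=yu::su) (x:=yu) (or_introl erefl).
  have := H yu; rewrite mult_nil muln0 Eu => E.
  by move: P0; rewrite -(ltn_pmul2l a0) E muln0.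
rewrite -Ev in Hv H.
have Iu : In yu chu by rewrite Eu; left.
have Iv : In yv chv by rewrite Ev; left.
have gu := ms_gpos chu' Iu; have gv := ms_gpos chv' Iv.
set p := a * gcd_mult chu; set q := b * gcd_mult chv.
have Hpq : forall x, p * mult chu' x = q * mult chv' x.
  by move=> x; rewrite /p /q -!mulnA -(ms_all Hu) -(ms_all Hv).
have qp : q %| p.
  rewrite -[p]muln1 -(ms_G1 Hu Iu) -G_mul; apply: G_dvd => y _.
  by rewrite Hpq dvdn_mulr.
have pq : p %| q.
  rewrite -[q]muln1 -(ms_G1 Hv Iv) -G_mul; apply: G_dvd => y _.
  by rewrite -Hpq dvdn_mulr.
have Epq : p = q by apply/eqP; rewrite eqn_dvd pq qp.
have p0 : 0 < p by rewrite muln_gt0 a0 gu.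
by move=> x; apply/eqP; rewrite -(eqn_pmul2l p0) {2}Epq Hpq.
Qed.

Lemma lemmaB (S : Type) (chu chu' chv chv' : seq (ltree S)) :
  mean_select chu chu' -> mean_select chv chv' ->
  (forall x, mult chu' x = mult chv' x) ->
  exists a b, 0 < a /\ 0 < b /\ forall x, a * mult chu x = b * mult chv x.
Proof.
move=> Hu Hv H.
case Eu: chu Hu => [|yu su] Hu; case Ev: chv Hv => [|yv sv] Hv.
- by exists 1, 1.
- have P0 := mult_refl_pos (s:=yv::sv) (x:=yv) (or_introl erefl).
  by move: P0; rewrite (ms_all Hv yv) -H (ms_nil Hu) mult_nil muln0.
- have P0 := mult_refl_pos (s:=yu::su) (x:=yu) (or_introl erefl).
  by move: P0; rewrite (ms_all Hu yu) H (ms_nil Hv) mult_nil muln0.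
- rewrite -Eu in Hu *; rewrite -Ev in Hv *.
  exists (gcd_mult chv), (gcd_mult chu); split; [|split].
  + by apply: (ms_gpos chv' (y:=yv)); rewrite Ev; left.
  + by apply: (ms_gpos chu' (y:=yu)); rewrite Eu; left.
  + by move=> x; rewrite (ms_all Hu) (ms_all Hv) H mulnCA.
Qed.

Lemma lemmaM (S : Type) (s1 s2 : seq (ltree S)) :
  (forall x, mult s1 x = mult s2 x) ->
  exists s2', Permutation s2 s2' /\ Forall2 (@tiso S) s1 s2'.
Proof.
elim: s1 s2 => [|a s1 IH] s2 H.
  case: s2 H => [|b s2] H; first by exists nil.
  have P0 := mult_refl_pos (s:=b::s2) (x:=b) (or_introl erefl).
  by move: P0; rewrite -H mult_nil.
have : 0 < mult s2 a by rewrite -H (mult_refl_pos (x:=a)) //; left.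
case: (mult_dich s2 a) => [->//|[b [Hb Hab]] _].
have [p [q E]] := in_split _ _ Hb; subst s2.
have H' : forall x, mult s1 x = mult (p ++ q) x.
  move=> x; have := H x; rewrite mult_cons !mult_cat mult_cons (tisoE x Hab).
  by rewrite addnCA => /eqP; rewrite eqn_add2l => /eqP.
have [s2'' [P F]] := IH _ H'.
exists (b :: s2''); split; last by constructor.
apply: Permutation_trans (Permutation_sym (Permutation_middle p q b)) _.
by constructor.
Qed.
Definition rep (X : seq nat) (a : nat) : seq nat := flatten (nseq a X).

Lemma count_rep (p : pred nat) X a : count p (rep X a) = a * count p X.
Proof. elim: a => [|a IH] //; by rewrite /rep /= count_cat -/(rep X a) IH mulSn. Qed.

Definition propr (X Y : seq nat) : Prop :=
  exists a b, 0 < a /\ 0 < b /\ forall p : pred nat, a * count p X = b * count p Y.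

Lemma prop_of_mem (X Y : seq nat) a b : 0 < a -> 0 < b ->
  (forall c, a * count_mem c X = b * count_mem c Y) -> propr X Y.
Proof.
move=> a0 b0 H; exists a, b; split => //; split => // p.
have : perm_eq (rep X a) (rep Y b).
  by apply/allP => c _ /=; rewrite !count_rep H.
by move/permP => /(_ p); rewrite !count_rep.
Qed.

Lemma mem_cnt (c : nat) X : (c \in X) = (0 < count_mem c X).
Proof. by rewrite -has_count has_pred1. Qed.

Definition ratio (X : seq nat) (c : nat) : rat := ((count_mem c X)%:R / (size X)%:R)%R.

Lemma in_freq X c r : ((c, r) \in freq X) = (c \in X) && (r == ratio X c).
Proof.
apply/imfsetP/andP => [[x xX [-> ->]]|[cX /eqP ->]]; first by split.
by exists c.
Qed.

Lemma ratio_eq X Y c : c \in X -> c \in Y ->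
  (ratio X c == ratio Y c) = (count_mem c X * size Y == count_mem c Y * size X).
Proof.
move=> cX cY.
have sX : ((size X)%:R != 0 :> rat)%R.
  by rewrite pnatr_eq0 -lt0n (leq_trans _ (count_size (pred1 c) X)) // -mem_cnt.
have sY : ((size Y)%:R != 0 :> rat)%R.
  by rewrite pnatr_eq0 -lt0n (leq_trans _ (count_size (pred1 c) Y)) // -mem_cnt.
by rewrite /ratio eqr_div // -!natrM eqr_nat.
Qed.

Lemma freq_prop X Y : freq X = freq Y -> propr X Y.
Proof.
move=> E.
have memE : forall c, (c \in X) = (c \in Y).
  move=> c; apply/idP/idP => H.
    by have := in_freq X c (ratio X c); rewrite H eqxx E in_freq => /andP[].
  by have := in_freq Y c (ratio Y c); rewrite H eqxx -E in_freq => /andP[].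
have cntE : forall c, count_mem c X * size Y = count_mem c Y * size X.
  move=> c; case: (boolP (c \in X)) => cX.
    have cY : c \in Y by rewrite -memE.
    have := in_freq X c (ratio X c); rewrite cX eqxx E in_freq cY /= eq_sym.
    by rewrite ratio_eq // => /eqP.
  have cY : c \notin Y by rewrite -memE.
  by move/count_memPn: cX => ->; move/count_memPn: cY => ->.
clear E; case: X memE cntE => [|x X] memE cntE.
  case: Y memE cntE => [|y Y] memE cntE; first by exists 1, 1.
  by have := memE y; rewrite in_cons eqxx.
have yY : x \in Y by rewrite -memE in_cons eqxx.
apply: (@prop_of_mem _ _ (size Y) (size (x :: X))) => //.
  by case: Y yY {memE cntE}.
by move=> c; rewrite mulnC cntE mulnC.
Qed.

Lemma prop_freq X Y : propr X Y -> freq X = freq Y.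
Proof.
move=> [a [b [a0 [b0 H]]]].
have memE : forall c, (c \in X) = (c \in Y).
  move=> c; rewrite !mem_cnt -(ltn_pmul2l a0) H muln0.
  by rewrite -[in RHS](ltn_pmul2l b0) muln0.
have sE : a * size X = b * size Y by rewrite -!count_predT H.
apply/fsetP => [[c r]]; rewrite !in_freq -memE.
case: (boolP (c \in X)) => cX //=.
have cY : c \in Y by rewrite -memE.
suff -> : ratio X c = ratio Y c by [].
apply/eqP; rewrite ratio_eq //; apply/eqP.
have Hc := H (pred1 c).
have ab0 : 0 < a * b by rewrite muln_gt0 a0.
apply/eqP; rewrite -(eqn_pmul2l ab0); apply/eqP.
transitivity ((a * count_mem c X) * (b * size Y)); first by ring.
by rewrite Hc -sE; ring.
Qed.

Lemma F2map (A B C : Type) (R : B -> C -> Prop) (f : A -> B) l l' :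
  Forall2 R (map f l) l' -> Forall2 (fun w t => R (f w) t) l l'.
Proof.
elim: l l' => [|x l IH] [|y l'] H; inversion H; subst; constructor => //; exact: IH.
Qed.

Lemma F2_In (A B : Type) (R : A -> B -> Prop) l l' t :
  Forall2 R l l' -> In t l' -> exists w, R w t.
Proof.
elim=> [|x y l0 l0' Hxy _ IH] //= [<-|H]; first by exists x.
exact: IH.
Qed.

Lemma F2_mem (A : eqType) (B : Type) (R : A -> B -> Prop) l l' w :
  Forall2 R l l' -> w \in l -> exists t, R w t.
Proof.
elim=> [|x y l0 l0' Hxy _ IH] //; rewrite in_cons => /orP[/eqP ->|H].
  by exists y.
exact: IH.
Qed.

Lemma mprune_inv (S : Type) a (ch : seq (ltree S)) T' :
  mprune (LNode a ch) T' ->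
  exists chp ch', T' = LNode a ch' /\ Forall2 (@mprune S) ch chp /\ mean_select chp ch'.
Proof. move=> H; inversion H; subst; by exists chp, ch'. Qed.

Lemma refine1 (Sigma : countType) (T : finType) (e : rel T)
    (lab : T -> Sigma) (inj0 : Sigma -> nat)
    (relabel : nat * {fset (nat * rat)} -> nat) :
  injective relabel -> forall t x y,
  mwl e lab inj0 relabel t.+1 x = mwl e lab inj0 relabel t.+1 y ->
  mwl e lab inj0 relabel t x = mwl e lab inj0 relabel t y /\
  freq (nbr_colors e (mwl e lab inj0 relabel t) x) =
  freq (nbr_colors e (mwl e lab inj0 relabel t) y).
Proof. by move=> Hr t x y /= /Hr [-> ->]. Qed.

Lemma refine (Sigma : countType) (T : finType) (e : rel T)
    (lab : T -> Sigma) (inj0 : Sigma -> nat)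
    (relabel : nat * {fset (nat * rat)} -> nat) :
  injective relabel -> forall k t x y, k <= t ->
  mwl e lab inj0 relabel t x = mwl e lab inj0 relabel t y ->
  mwl e lab inj0 relabel k x = mwl e lab inj0 relabel k y.
Proof.
move=> Hr k t x y; elim: t => [|t IH]; first by rewrite leqn0 => /eqP ->.
rewrite leq_eqVlt => /orP[/eqP -> //|Hk] H.
by apply: IH => //; case: (refine1 Hr H).
Qed.

Lemma prop_refine (Sigma : countType) (T : finType) (e : rel T)
    (lab : T -> Sigma) (inj0 : Sigma -> nat)
    (relabel : nat * {fset (nat * rat)} -> nat) :
  injective relabel -> forall k L u v, k <= L ->
  propr (nbr_colors e (mwl e lab inj0 relabel L) u) (nbr_colors e (mwl e lab inj0 relabel L) v) ->
  propr (nbr_colors e (mwl e lab inj0 relabel k) u) (nbr_colors e (mwl e lab inj0 relabel k) v).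
Proof.
move=> Hr k L u v Hk [a [b [a0 [b0 H]]]]; exists a, b; split => //; split => // p.
pose p' := fun c => [exists w, (mwl e lab inj0 relabel L w == c) && p (mwl e lab inj0 relabel k w)].
have E : forall s, count p (map (mwl e lab inj0 relabel k) s) =
                   count p' (map (mwl e lab inj0 relabel L) s).
  move=> s; rewrite !count_map; apply: eq_count => w /=.
  apply/idP/existsP => [Hw|[w' /andP[/eqP Ew Hw]]]; first by exists w; rewrite eqxx Hw.
  by rewrite -(refine Hr Hk Ew).
by rewrite /nbr_colors !E H.
Qed.

Lemma bridge (Sigma : countType) (T : finType) (e : rel T)
    (lab : T -> Sigma) (inj0 : Sigma -> nat)
    (relabel : nat * {fset (nat * rat)} -> nat) L :
  (forall u v Tu Tv, mprune (unr e lab L u) Tu -> mprune (unr e lab L v) Tv ->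
     (mwl e lab inj0 relabel L u = mwl e lab inj0 relabel L v <-> tiso Tu Tv)) ->
  forall Ns chp w0 t0,
  Forall2 (fun w t => mprune (unr e lab L w) t) Ns chp ->
  mprune (unr e lab L w0) t0 ->
  mult chp t0 = count_mem (mwl e lab inj0 relabel L w0) (map (mwl e lab inj0 relabel L) Ns).
Proof.
move=> IHL Ns chp w0 t0 F Ht0; elim: F => [|w t Ns' chp' Hwt _ IH] //.
rewrite mult_cons IH /=.
suff -> : `[< tiso t0 t >] = (mwl e lab inj0 relabel L w == mwl e lab inj0 relabel L w0) by [].
by apply/asboolP/eqP => H; [symmetry; apply/(IHL _ _ _ _ Ht0 Hwt) | apply/(IHL _ _ _ _ Ht0 Hwt)].
Qed.

Lemma main_ind (Sigma : countType) (T : finType) (e : rel T)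
    (lab : T -> Sigma) (inj0 : Sigma -> nat)
    (relabel : nat * {fset (nat * rat)} -> nat) :
  injective inj0 -> injective relabel -> forall L,
  (forall u v Tu Tv, mprune (unr e lab L u) Tu -> mprune (unr e lab L v) Tv ->
     (mwl e lab inj0 relabel L u = mwl e lab inj0 relabel L v <-> tiso Tu Tv)).
Proof.
move=> Hi Hr; elim=> [|L IHL] u v Tu Tv Hu Hv.
  have [chpu [ch'u [-> [Fu Mu]]]] := mprune_inv Hu.
  have [chpv [ch'v [-> [Fv Mv]]]] := mprune_inv Hv.
  inversion Fu; inversion Fv; subst.
  rewrite (ms_nil Mu) (ms_nil Mv) /=; split => [/Hi ->|]; first exact: tiso_refl.
  by move=> Ht; have [-> _] := tiso_inv Ht.
have [chpu [ch'u [-> [Fu0 Mu]]]] := mprune_inv Hu.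
have [chpv [ch'v [-> [Fv0 Mv]]]] := mprune_inv Hv.
have Fu := F2map Fu0; have Fv := F2map Fv0.
set C := mwl e lab inj0 relabel L.
set Nu := [seq w <- enum T | e u w] in Fu; set Nv := [seq w <- enum T | e v w] in Fv.
have key : forall a b, (forall c, a * count_mem c (map C Nu) = b * count_mem c (map C Nv)) ->
    forall x, a * mult chpu x = b * mult chpv x.
  move=> a b H x; case: (mult_dich (chpu ++ chpv) x) => [|[y [Hy Hxy]]].
    by rewrite mult_cat => /eqP; rewrite addn_eq0 => /andP[/eqP -> /eqP ->]; rewrite !muln0.
  rewrite !(mult_tiso _ Hxy).
  have [w0 Hw0] : exists w0, mprune (unr e lab L w0) y.
    by case: (in_app_or _ _ _ Hy) => Hy'; [exact: F2_In Fu Hy' | exact: F2_In Fv Hy'].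
  by rewrite (bridge IHL Fu Hw0) (bridge IHL Fv Hw0).
have key' : forall a b, (forall x, a * mult chpu x = b * mult chpv x) ->
    forall c, a * count_mem c (map C Nu) = b * count_mem c (map C Nv).
  move=> a b H c; case: (boolP (c \in map C Nu ++ map C Nv)) => [|Hc].
    have getw : forall w0, (w0 \in Nu) || (w0 \in Nv) -> a * count_mem (C w0) (map C Nu) = b * count_mem (C w0) (map C Nv).
      move=> w0 /orP[Hw|Hw].
        have [t0 Ht0] := F2_mem Fu Hw.
        by rewrite -(bridge IHL Fu Ht0) -(bridge IHL Fv Ht0).
      have [t0 Ht0] := F2_mem Fv Hw.
      by rewrite -(bridge IHL Fu Ht0) -(bridge IHL Fv Ht0).
    by rewrite mem_cat => /orP[/mapP [w0 Hw ->]|/mapP [w0 Hw ->]]; apply: getw; rewrite Hw ?orbT.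
  move: Hc; rewrite mem_cat negb_or => /andP[/count_memPn -> /count_memPn ->].
  by rewrite !muln0.
split.
  move=> H; have [CL Hf] := refine1 Hr H.
  have labE : lab u = lab v by apply: Hi; apply: (refine Hr (leq0n L.+1) H).
  have [a [b [a0 [b0 Hp]]]] := freq_prop Hf.
  have Hm := key a b (fun c => Hp (pred1 c)).
  have Heq := lemmaA Mu Mv a0 b0 Hm.
  have [s [P F]] := lemmaM Heq.
  rewrite labE; exact: (@tiso_node Sigma (lab v) ch'u ch'v s P F).
move=> Ht; have [labE [s [P F]]] := tiso_inv Ht.
have Heq : forall x, mult ch'u x = mult ch'v x.
  by move=> x; rewrite (mult_F2 x F) (mult_perm x P).
have [a [b [a0 [b0 Hm]]]] := lemmaB Mu Mv Heq.
have Hprop : propr (nbr_colors e C u) (nbr_colors e C v).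
  exact: (prop_of_mem a0 b0 (key' a b Hm)).
suff : forall k, k <= L.+1 -> mwl e lab inj0 relabel k u = mwl e lab inj0 relabel k v.
  by apply.
elim=> [_|k IHk Hk] /=; first by rewrite labE.
rewrite IHk ?(ltnW Hk) //.
by rewrite (prop_freq (@prop_refine _ _ _ _ _ _ Hr k L u v Hk Hprop)).
Qed.

Theorem mainTheorem1 (Sigma : countType) (T : finType) (e : rel T)
    (lab : T -> Sigma) (inj0 : Sigma -> nat)
    (relabel : nat * {fset (nat * rat)} -> nat)
    (L : nat) (u v : T) (Tu Tv : ltree Sigma) :
  symmetric e -> irreflexive e ->
  injective inj0 -> injective relabel ->
  (* RELABEL produces colors not used in previous iterations *)
  (forall (t s : nat) (x y : T), (s < t)%N ->
     mwl e lab inj0 relabel t x <> mwl e lab inj0 relabel s y) ->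
  mprune (unr e lab L u) Tu -> mprune (unr e lab L v) Tv ->
  (mwl e lab inj0 relabel L u = mwl e lab inj0 relabel L v <-> tiso Tu Tv).
Proof.
move=> _ _ Hi Hr _; exact: main_ind.
Qed.
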